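(* Let $M := \langle X \mid R\rangle$, and suppose that the set $Y := \{x\in X \mid \exists\, a,b,c\in\langle X\rangle \text{ such that } (axb,c)\in R \text{ or } (c,axb)\in R\}$ is finite. Then the following are equivalent: (1) There exists $a\in\langle X\rangle$ such that $\mathsf{Z}_M(a)$ is infinite. (2) There exists $a\in\langle X\rangle$ such that $\mathsf{L}_M(a)$ is infinite. (3) There exists $k\in\mathbb{N}$ such that $\mathcal{U}_k(M)$ is infinite (equivalently $\rho_k(M)=\infty$). (4) There exists $k\in\mathbb{N}$ such that $\mathcal{U}_n(M)$ is infinite (equivalently $\rho_n(M)=\infty$) for all $n\ge k$.
   Context: For a set $X$, $\langle X\rangle$ is the free monoid on $X$ (identity $1$); $M=\langle X\mid R\rangle$ is the monoid presented by generators $X$ and relations $R\subseteq\langle X\rangle\times\langle X\rangle$. $|a|$ is word length; $a=_M b$ means equal images in $M$. $\mathsf{Z}_M(a) := \{b\in\langle X\rangle : b=_M a\}$, $\mathsf{L}_M(a) := \{|b| : b\in\mathsf{Z}_M(a)\}$, $\mathcal{L}(M):=\{\mathsf{L}_M(a): a\in\langle X\rangle\}$. For $k\in\mathbb{N}$, $\mathcal{U}_k(M) := \bigcup\{L\in\mathcal{L}(M) : k\in L\}$ and, when nonempty, $\rho_k(M) := \sup\mathcal{U}_k(M)\in\mathbb{N}\cup\{\infty\}$. *)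

(* Defs.v *)
(* Words in the free monoid <X> are lists over X (identity = nil,
   product = ++). A presentation <X | R> is given by a relation R on words
   (R u v  means (u,v) ∈ R). *)
From Stdlib Require Import List Arith.
Import ListNotations.

Set Implicit Arguments.

Inductive mcong (X : Type) (R : list X -> list X -> Prop) : list X -> list X -> Prop :=
| mcong_refl : forall a, mcong R a a
| mcong_sym : forall a b, mcong R a b -> mcong R b a
| mcong_trans : forall a b c, mcong R a b -> mcong R b c -> mcong R a c
| mcong_step : forall p q u v, R u v -> mcong R (p ++ u ++ q) (p ++ v ++ q).

Definition finite_set (T : Type) (P : T -> Prop) : Prop :=
  exists s : list T, forall x, P x -> In x s.

Definition rel_letters (X : Type) (R : list X -> list X -> Prop) (x : X) : Prop :=
  exists a b c, R (a ++ x :: b) c \/ R c (a ++ x :: b).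

Definition Zset (X : Type) (R : list X -> list X -> Prop) (a : list X) : list X -> Prop :=
  fun b => mcong R b a.

Definition Lset (X : Type) (R : list X -> list X -> Prop) (a : list X) : nat -> Prop :=
  fun n => exists b, Zset R a b /\ length b = n.

Definition Uset (X : Type) (R : list X -> list X -> Prop) (k : nat) : nat -> Prop :=
  fun n => exists a, Lset R a k /\ Lset R a n.

(* Main.v *)
Require Import Defs.
From Stdlib Require Import List Arith Lia Classical ClassicalEpsilon.
Import ListNotations.

Section Aux.
Variable X : Type.
Variable R : list X -> list X -> Prop.

Lemma mcong_app_r a b t : mcong R a b -> mcong R (a ++ t) (b ++ t).
Proof.
  induction 1.
  - apply mcong_refl.
  - now apply mcong_sym.
  - eapply mcong_trans; eauto.
  - rewrite <- !app_assoc. apply mcong_step; auto.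
Qed.

Lemma Rletters u v : R u v ->
  (forall x, In x u -> rel_letters R x) /\ (forall x, In x v -> rel_letters R x).
Proof.
  intros H; split; intros x Hx; destruct (in_split _ _ Hx) as [a [b E]]; subst.
  - exists a, b, v; now left.
  - exists a, b, u; now right.
Qed.

Lemma inv a b : mcong R a b ->
  (forall x, In x b -> rel_letters R x \/ In x a) /\
  (forall x, In x a -> rel_letters R x \/ In x b).
Proof.
  induction 1.
  - split; auto.
  - tauto.
  - destruct IHmcong1 as [H1 H2], IHmcong2 as [H3 H4]; split; intros x Hx.
    + destruct (H3 x Hx); auto.
    + destruct (H2 x Hx); auto.
  - destruct (Rletters _ _ H) as [Hu Hv]; split; intros x Hx;
      repeat rewrite in_app_iff in *; intuition.
Qed.

Lemma hom (f : X -> X) (Hf : forall x, rel_letters R x -> f x = x) b c :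
  mcong R b c -> mcong R (map f b) (map f c).
Proof.
  induction 1.
  - apply mcong_refl.
  - now apply mcong_sym.
  - eapply mcong_trans; eauto.
  - rewrite !map_app.
    destruct (Rletters _ _ H) as [Hu Hv].
    assert (E : forall w, (forall x, In x w -> rel_letters R x) -> map f w = w).
    { induction w; simpl; intros; auto. rewrite Hf, IHw; auto. }
    rewrite (E u Hu), (E v Hv). apply mcong_step; auto.
Qed.

Fixpoint words (A : list X) (n : nat) : list (list X) :=
  match n with
  | 0 => [[]]
  | Datatypes.S n => flat_map (fun w => map (fun x => x :: w) A) (words A n)
  end.

Lemma words_in A w : (forall x, In x w -> In x A) -> In w (words A (length w)).
Proof.
  induction w; simpl; intros H; [left; auto|].
  apply in_flat_map; exists w; split.
  - apply IHw; intros; apply H; right; auto.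
  - apply in_map_iff; exists a; split; auto.
Qed.

Lemma fin_union (A : Type) (l : list A) (P : A -> nat -> Prop) :
  (forall b, In b l -> finite_set (P b)) ->
  finite_set (fun n => exists b, In b l /\ P b n).
Proof.
  induction l; intros H.
  - exists []; intros n [b [[] _]].
  - destruct (H a (or_introl eq_refl)) as [s1 Hs1].
    destruct IHl as [s2 Hs2]; [intros; apply H; right; auto|].
    exists (s1 ++ s2); intros n [b [[E|Hb] Hp]]; apply in_app_iff.
    + subst; left; auto.
    + right; apply Hs2; eauto.
Qed.

Lemma bound_of_fin (P : nat -> Prop) : finite_set P -> exists N, forall n, P n -> n <= N.
Proof.
  intros [s Hs]. exists (list_sum s). intros n Hn.
  specialize (Hs n Hn). clear Hn; induction s; simpl in *; [contradiction|].
  destruct Hs; subst; [lia|]. specialize (IHs H); lia.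
Qed.

Hypothesis hY : finite_set (rel_letters R).

Lemma c1c2 a : ~ finite_set (Zset R a) -> ~ finite_set (Lset R a).
Proof.
  intros HZ HL. apply HZ. destruct (bound_of_fin _ HL) as [N HN].
  destruct hY as [Yl HYl].
  exists (flat_map (fun n => words (Yl ++ a) n) (seq 0 (Datatypes.S N))).
  intros b Hb. apply in_flat_map. exists (length b). split.
  - apply in_seq. assert (length b <= N) by (apply HN; exists b; auto). lia.
  - apply words_in. intros x Hx. destruct (proj2 (inv _ _ Hb) x Hx) as [H|H];
      apply in_app_iff; auto; left; auto.
Qed.

Lemma c2c1 a : ~ finite_set (Lset R a) -> ~ finite_set (Zset R a).
Proof.
  intros HL [s Hs]. apply HL. exists (map (@length X) s).
  intros n [b [Hb E]]. subst. apply in_map; auto.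
Qed.

Lemma c2c3 a : ~ finite_set (Lset R a) -> ~ finite_set (Uset R (length a)).
Proof.
  intros HL [s Hs]. apply HL. exists s. intros n Hn. apply Hs.
  exists a; split; auto. exists a; split; auto. apply mcong_refl.
Qed.

Lemma c3c2 k : ~ finite_set (Uset R k) -> exists a, ~ finite_set (Lset R a).
Proof.
  intros HU. apply NNPP; intros Hn.
  assert (HF : forall a, finite_set (Lset R a)).
  { intros a; apply NNPP; intros H; apply Hn; eauto. }
  apply HU. destruct hY as [Yl HYl].
  assert (Hf : exists (f : X -> X) (A : list X),
    (forall x, rel_letters R x -> f x = x) /\ (forall x, In (f x) A)).
  { destruct (classic (exists z, ~ rel_letters R z)) as [[z Hz]|Hno].
    - exists (fun x => if excluded_middle_informative (rel_letters R x) then x else z).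
      exists (z :: Yl). split; intros x.
      + intros Hx. destruct (excluded_middle_informative _); tauto.
      + destruct (excluded_middle_informative _); simpl; auto.
    - exists (fun x => x), Yl. split; auto. intros x. apply HYl.
      apply NNPP; intros H; apply Hno; eauto. }
  destruct Hf as [f [A [Hf1 Hf2]]].
  destruct (fin_union _ (words A k) (fun b => Lset R b)) as [s Hs].
  { intros; apply HF. }
  exists s. intros n [a [[b [Hb Eb]] [c [Hc Ec]]]]. apply Hs.
  exists (map f b). split.
  - rewrite <- Eb, <- (length_map f b). apply words_in.
    intros x Hx. apply in_map_iff in Hx. destruct Hx as [y [<- _]]. auto.
  - exists (map f c). split.
    + apply hom; auto. unfold Zset in *. eapply mcong_trans; eauto. now apply mcong_sym.
    + now rewrite length_map.
Qed.

Lemma c2c4 a : ~ finite_set (Lset R a) ->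
  forall n, length a <= n -> ~ finite_set (Uset R n).
Proof.
  intros HL.
  assert (Hx0 : exists x0 : X, True).
  { apply NNPP; intros H. apply HL. exists [0]. intros m [b [_ E]].
    destruct b; [subst; left; auto|]. exfalso; apply H; eauto. }
  destruct Hx0 as [x0 _].
  intros n Hn [s Hs]. apply HL.
  exists (map (fun j => j - (n - length a)) s).
  intros m [c [Hc Ec]]. apply in_map_iff. exists (m + (n - length a)).
  split; [lia|]. apply Hs.
  exists (a ++ repeat x0 (n - length a)). split.
  - exists (a ++ repeat x0 (n - length a)). split; [apply mcong_refl|].
    rewrite length_app, repeat_length. lia.
  - exists (c ++ repeat x0 (n - length a)). split.
    + apply mcong_app_r; auto.
    + rewrite length_app, repeat_length. lia.
Qed.
End Aux.

Theorem proposition4p4 (X : Type) (R : list X -> list X -> Prop)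
  (hY : finite_set (rel_letters R)) :
  let c1 := exists a : list X, ~ finite_set (Zset R a) in
  let c2 := exists a : list X, ~ finite_set (Lset R a) in
  let c3 := exists k : nat, ~ finite_set (Uset R k) in
  let c4 := exists k : nat, forall n : nat, k <= n -> ~ finite_set (Uset R n) in
  (c1 <-> c2) /\ (c2 <-> c3) /\ (c3 <-> c4).
Proof.
  intros c1 c2 c3 c4. unfold c1, c2, c3, c4.
  split; [|split]; split.
  - intros [a H]; exists a; apply (c1c2 _ _ hY); auto.
  - intros [a H]; exists a; apply (c2c1 X R); auto.
  - intros [a H]; exists (length a); apply (c2c3 X R); auto.
  - intros [k H]; apply (c3c2 _ _ hY k H).
  - intros [k H]. destruct (c3c2 _ _ hY k H) as [a Ha].
    exists (length a). apply (c2c4 X R); auto.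
  - intros [k H]. exists k. apply H; auto.
Qed.
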